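(* Consider the uncertain system $$\dot{\mathbf{x}} = \mathbf{A}\mathbf{x} + \mathbf{b}k_p\big(u + \boldsymbol{\theta}^T\boldsymbol{\phi}(\mathbf{x})\big),$$ with $\mathbf{x}\in\mathbb{R}^n$, $u\in\mathbb{R}$, unknown $\mathbf{A}\in\mathbb{R}^{n\times n}$, known $\mathbf{b}\in\mathbb{R}^n$ with $\mathbf{b}^T\mathbf{b}>0$, unknown constant $k_p\ne0$ with known sign $k_p'=\operatorname{sign}(k_p)$, unknown $\boldsymbol{\theta}\in\mathbb{R}^p$, and known locally Lipschitz $\boldsymbol{\phi}:\mathbb{R}^n\to\mathbb{R}^p$. Let $\dot{\mathbf{x}}_r=\mathbf{A}_r\mathbf{x}_r+\mathbf{b}_r r$ with $\mathbf{A}_r$ Hurwitz and $r$ bounded piecewise continuous, and let $\mathbf{P},\mathbf{Q}$ be symmetric positive definite with $\mathbf{A}_r^T\mathbf{P}+\mathbf{P}\mathbf{A}_r+\mathbf{Q}=\mathbf{0}$. Assume ideal gains $\mathbf{k}_x,k_r$ exist with $\mathbf{A}+\mathbf{b}k_p\mathbf{k}_x^T=\mathbf{A}_r$, $\mathbf{b}k_pk_r=\mathbf{b}_r$. Let $\mathbf{W}^T=[\mathbf{A}\ \ \mathbf{b}k_p\ \ \mathbf{b}k_p\boldsymbol{\theta}^T]\in\mathbb{R}^{n\times(n+1+p)}$. Let $t_q>t_0$ and let $\mathbf{Y}_m(t)\in\mathbb{R}^{n\times(n+1+p)}$ be a signal with $\mathbf{Y}_m(t)=\mathbf{W}^T$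 for all $t\ge t_q$ (as produced by the paper's data-storage procedure once the regressor $[\mathbf{x}^T,u,\boldsymbol{\phi}^T]^T$ satisfies the finite excitation condition at time $t_q$), and let $\eta(t)=0$ for $t<t_q$ and $\eta(t)=1$ for $t\ge t_q$. Define $$\mathbf{E}_1=\mathbf{A}_r-\mathbf{Y}_m\begin{bmatrix}\mathbf{I}_n & \mathbf{0}_{n\times(1+p)}\end{bmatrix}^T-\mathbf{Y}_m\mathbf{c}\,\hat{\mathbf{k}}_x^T,\quad \mathbf{E}_2=\mathbf{b}_r-\mathbf{Y}_m\mathbf{c}\,\hat{k}_r,\quad \mathbf{E}_3=\mathbf{Y}_m\begin{bmatrix}\mathbf{0}_{p\times(n+1)} & \mathbf{I}_p\end{bmatrix}^T-\mathbf{Y}_m\mathbf{c}\,\hat{\boldsymbol{\theta}}^T,$$ where $\mathbf{c}=[\mathbf{0}_{1\times n}\ 1\ \mathbf{0}_{1\times p}]^T$. Apply $u=\hat{\mathbf{k}}_x^T\mathbf{x}+\hat{k}_r r-\hat{\boldsymbol{\theta}}^T\boldsymbol{\phi}(\mathbf{x})$ with $$\dot{\hat{\mathbf{k}}}_x=-\mathbf{x}\mathbf{e}^T\mathbf{P}\mathbf{b}k_p'+\eta\mathbf{E}_1^T\mathbf{b}k_p',\quad \dot{\hat{k}}_r=-r\mathbf{e}^T\mathbf{P}\mathbf{b}k_p'+\eta\mathbf{E}_2^T\mathbf{b}k_p',\quad \dot{\hat{\boldsymbol{\theta}}}=\boldsymbol{\phi}(\mathbf{x})\mathbf{e}^T\mathbf{P}\mathbf{b}k_p'+\eta\mathbf{E}_3^T\mathbf{b}k_p',$$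 where $\mathbf{e}=\mathbf{x}-\mathbf{x}_r$. Let $\boldsymbol{\chi}=[\mathbf{e}^T,\tilde{\mathbf{k}}_x^T,\tilde{k}_r,\tilde{\boldsymbol{\theta}}^T]^T$ with $\tilde{\mathbf{k}}_x=\hat{\mathbf{k}}_x-\mathbf{k}_x$, $\tilde{k}_r=\hat{k}_r-k_r$, $\tilde{\boldsymbol{\theta}}=\hat{\boldsymbol{\theta}}-\boldsymbol{\theta}$. Then: (1) the origin of the closed-loop error system in $\boldsymbol{\chi}$ is uniformly stable for $t\ge t_0$; (2) it is exponentially stable for $t>t_q$; (3) for all $t>t_q$, $$\|\boldsymbol{\chi}(t)\|\le \alpha\, e^{-\kappa(t-t_q)}\|\boldsymbol{\chi}(t_0)\|,$$ with $$\kappa=\frac{1}{2}\,\frac{\min\{\lambda_{\min}(\mathbf{Q}),\,2|k_p|^2\mathbf{b}^T\mathbf{b}\}}{\max\{\lambda_{\max}(\mathbf{P}),\,|k_p|\}},\qquad \alpha=\sqrt{\frac{\max\{\lambda_{\max}(\mathbf{P}),\,|k_p|\}}{\min\{\lambda_{\min}(\mathbf{P}),\,|k_p|\}}},$$ so that the rate $\kappa$ depends only on $\mathbf{P},\mathbf{Q},\mathbf{b},|k_p|$ and not on the excitation level of the regressor.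
   Context: A bounded signal $\boldsymbol{\varphi}(t)\in\mathbb{R}^q$ is finitely exciting if there are constants $\gamma,T>0$ and at least one sequence of times $t_1,\dots,t_q$ in an interval $[t,t+T]$ such that the matrix $[\boldsymbol{\varphi}(t_1)\ \cdots\ \boldsymbol{\varphi}(t_q)]$ is invertible with inverse of norm at most $\gamma$ ($\gamma$ is the excitation level). In the paper, once this holds for $\boldsymbol{\varphi}=[\mathbf{x}^T,u,\boldsymbol{\phi}^T]^T$ (by time $t_q$), filtered data are orthonormalized into an orthogonal $\boldsymbol{\Phi}_b$ with $\mathbf{Y}_b=\mathbf{W}^T\boldsymbol{\Phi}_b$, and $\mathbf{Y}_m=\mathbf{Y}_b\boldsymbol{\Phi}_b^T$, $\eta=\det(\boldsymbol{\Phi}_b\boldsymbol{\Phi}_b^T)$, giving $\mathbf{Y}_m=\mathbf{W}^T$ and $\eta=1$ for $t\ge t_q$, and $\eta=0$ before. $k_p'$ is the known sign of $k_p$; $\lambda_{\min},\lambda_{\max}$ denote minimum and maximum eigenvalues. *)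

(* Defs.v *)
From HB Require Import structures.
From mathcomp Require Import all_boot all_order all_algebra.
From mathcomp Require Import all_classical all_reals all_analysis.
Set Implicit Arguments. Unset Strict Implicit. Unset Printing Implicit Defensive.
Import Order.TTheory GRing.Theory Num.Theory.
Import numFieldNormedType.Exports.
Local Open Scope classical_set_scope.
Local Open Scope ring_scope.

Section Defs.
Variable R : realType.

Definition sq_norm {m : nat} (v : 'cV[R]_m) : R := \sum_(i < m) (v i 0) ^+ 2.
Definition enorm {m : nat} (v : 'cV[R]_m) : R := Num.sqrt (sq_norm v).

Definition chi_norm {n p : nat} (e kxt : 'cV[R]_n) (krt : R) (tht : 'cV[R]_p) : R :=
  Num.sqrt (sq_norm e + sq_norm kxt + krt ^+ 2 + sq_norm tht).

Definition sym_posdef {n : nat} (P : 'M[R]_n) : Prop :=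
  P^T = P /\ forall v : 'cV[R]_n, v != 0 -> 0 < (v^T *m P *m v) 0 0.

Definition is_min_eig {n : nat} (M : 'M[R]_n) (l : R) : Prop :=
  eigenvalue M l /\ forall a, eigenvalue M a -> l <= a.
Definition is_max_eig {n : nat} (M : 'M[R]_n) (l : R) : Prop :=
  eigenvalue M l /\ forall a, eigenvalue M a -> a <= l.

(* Hurwitz: every (complex) eigenvalue a + i w of M, with complex eigenvector
   v1 + i v2 != 0, has negative real part a (real and imaginary parts of
   M (v1 + i v2) = (a + i w)(v1 + i v2) written out). *)
Definition hurwitz {n : nat} (M : 'M[R]_n) : Prop :=
  forall (a w : R) (v1 v2 : 'cV[R]_n), (v1 != 0) || (v2 != 0) ->
    M *m v1 = a *: v1 - w *: v2 -> M *m v2 = w *: v1 + a *: v2 -> a < 0.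

Definition loc_lipschitz {n p : nat} (f : 'cV[R]_n -> 'cV[R]_p) : Prop :=
  forall x0 : 'cV[R]_n, exists d L : R, 0 < d /\
    forall y z, enorm (y - x0) < d -> enorm (z - x0) < d ->
      enorm (f y - f z) <= L * enorm (y - z).

Definition bounded_pw_cont (r : R -> R) : Prop :=
  (exists M : R, forall t, `|r t| <= M) /\
  (forall a b : R, exists D : seq R, forall t, a <= t <= b -> t \notin D ->
      {for t, continuous r}) /\
  (forall t : R, cvg (r x @[x --> t^'-]) /\ cvg (r x @[x --> t^'+])).

Definition has_deriv {m k : nat} (f : R -> 'M[R]_(m, k)) (t : R) (df : 'M[R]_(m, k)) : Prop :=
  forall i j, is_derive t (1 : R) (fun s => f s i j) (df i j).

Definition cont_from {m k : nat} (s : R) (f : R -> 'M[R]_(m, k)) : Prop :=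
  forall i j, {within [set t | s <= t], continuous (fun t => f t i j)}.

Definition eta (tq t : R) : R := if t < tq then 0 else 1.

Definition selx (n p : nat) : 'M[R]_(n + 1 + p, n) :=
  \matrix_(i, j) ((i : nat) == (j : nat))%:R.
Definition selc (n p : nat) : 'cV[R]_(n + 1 + p) :=
  \col_i ((i : nat) == n)%:R.
Definition selth (n p : nat) : 'M[R]_(n + 1 + p, p) :=
  \matrix_(i, j) ((i : nat) == (n + 1 + j)%N)%:R.

Definition WT {n p : nat} (A : 'M[R]_n) (b : 'cV[R]_n) (kp : R) (th : 'cV[R]_p)
  : 'M[R]_(n, n + 1 + p) :=
  row_mx (row_mx A (kp *: b)) (kp *: (b *m th^T)).

(* (x, xr, kxh, krh, thh) is a (piecewise-C^1, Caratheodory-type) solution of the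
   closed loop (plant + reference model + controller + adaptive laws) on [s, +oo):
   all signals are continuous on [s, +oo) and the differential equations hold at
   every t > s except at finitely many points in every bounded interval. *)
Definition closed_loop_sol {n p : nat} (A : 'M[R]_n) (b : 'cV[R]_n) (kp kps : R)
  (th : 'cV[R]_p) (phi : 'cV[R]_n -> 'cV[R]_p) (Ar : 'M[R]_n) (br : 'cV[R]_n)
  (r : R -> R) (P : 'M[R]_n) (Ym : R -> 'M[R]_(n, n + 1 + p)) (tq s : R)
  (x xr kxh : R -> 'cV[R]_n) (krh : R -> R) (thh : R -> 'cV[R]_p) : Prop :=
  cont_from s x /\ cont_from s xr /\ cont_from s kxh /\
  cont_from s (fun t => (krh t)%:M : 'M[R]_1) /\ cont_from s thh /\
  forall T : R, exists D : seq R, forall t, s < t -> t < T -> t \notin D ->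
    let e := x t - xr t in
    let sc := (e^T *m P *m b) 0 0 in
    let u := ((kxh t)^T *m x t) 0 0 + krh t * r t - ((thh t)^T *m phi (x t)) 0 0 in
    let Y := Ym t in
    let E1 := Ar - Y *m selx n p - (Y *m selc n p) *m (kxh t)^T in
    let E2 := br - krh t *: (Y *m selc n p) in
    let E3 := Y *m selth n p - (Y *m selc n p) *m (thh t)^T in
    [/\ has_deriv x t (A *m x t + (kp * (u + (th^T *m phi (x t)) 0 0)) *: b),
        has_deriv xr t (Ar *m xr t + r t *: br),
        has_deriv kxh t (- (sc * kps) *: x t + (eta tq t * kps) *: (E1^T *m b)),
        has_deriv (fun t' => (krh t')%:M : 'M[R]_1) t
          ((- (r t * sc * kps) + eta tq t * kps * (E2^T *m b) 0 0)%:M) &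
        has_deriv thh t ((sc * kps) *: phi (x t) + (eta tq t * kps) *: (E3^T *m b))].

End Defs.

(* Main.v *)
Require Import Defs.
From HB Require Import structures.
From mathcomp Require Import all_boot all_order all_algebra.
From mathcomp Require Import all_classical all_reals all_analysis.
From mathcomp Require Import ring lra.
Import Order.TTheory GRing.Theory Num.Theory.
Import numFieldNormedType.Exports.
Local Open Scope classical_set_scope.
Local Open Scope ring_scope.
Set Implicit Arguments. Unset Strict Implicit. Unset Printing Implicit Defensive.

Section Lin.
Variable R : realType.
Implicit Types (n : nat).

Definition dot n (v w : 'cV[R]_n) : R := (v^T *m w) 0 0.

Lemma dotE n (v w : 'cV[R]_n) : dot v w = \sum_i v i 0 * w i 0.
Proof. by rewrite /dot mxE; apply: eq_bigr => i _; rewrite mxE. Qed.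

Lemma dotC n (v w : 'cV[R]_n) : dot v w = dot w v.
Proof. by rewrite !dotE; apply: eq_bigr => i _; rewrite mulrC. Qed.

Lemma dotDr n (u v w : 'cV[R]_n) : dot u (v + w) = dot u v + dot u w.
Proof. by rewrite !dotE -big_split; apply: eq_bigr => i _; rewrite mxE mulrDr. Qed.

Lemma dotZr n a (u v : 'cV[R]_n) : dot u (a *: v) = a * dot u v.
Proof. by rewrite !dotE mulr_sumr; apply: eq_bigr => i _; rewrite mxE mulrCA. Qed.

Lemma dotNr n (u v : 'cV[R]_n) : dot u (- v) = - dot u v.
Proof. by rewrite -scaleN1r dotZr mulN1r. Qed.

Lemma dotBr n (u v w : 'cV[R]_n) : dot u (v - w) = dot u v - dot u w.
Proof. by rewrite dotDr dotNr. Qed.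

Lemma dotDl n (u v w : 'cV[R]_n) : dot (v + w) u = dot v u + dot w u.
Proof. by rewrite dotC dotDr !(dotC u). Qed.
Lemma dotZl n a (u v : 'cV[R]_n) : dot (a *: v) u = a * dot v u.
Proof. by rewrite dotC dotZr dotC. Qed.
Lemma dotNl n (u v : 'cV[R]_n) : dot (- v) u = - dot v u.
Proof. by rewrite dotC dotNr dotC. Qed.
Lemma dotBl n (u v w : 'cV[R]_n) : dot (v - w) u = dot v u - dot w u.
Proof. by rewrite dotDl dotNl. Qed.
Lemma dot0r n (u : 'cV[R]_n) : dot u 0 = 0.
Proof. by rewrite dotE big1 // => i _; rewrite mxE mulr0. Qed.

Lemma sq_normE n (v : 'cV[R]_n) : sq_norm v = dot v v.
Proof. by rewrite /sq_norm dotE; apply: eq_bigr => i _; rewrite expr2. Qed.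

Lemma dot_ge0 n (v : 'cV[R]_n) : 0 <= dot v v.
Proof. by rewrite dotE sumr_ge0 // => i _; rewrite -expr2 sqr_ge0. Qed.

Lemma dot_eq0 n (v : 'cV[R]_n) : dot v v = 0 -> v = 0.
Proof.
rewrite dotE => /eqP; rewrite psumr_eq0 => [/allP H|i _]; last by rewrite -expr2 sqr_ge0.
apply/matrixP => i j; rewrite (ord1 j) mxE.
have := H i (mem_index_enum _); rewrite -expr2 sqrf_eq0 => /eqP //.
Qed.

Lemma dot_gt0 n (v : 'cV[R]_n) : v != 0 -> 0 < dot v v.
Proof.
move=> nz; rewrite lt_neqAle dot_ge0 andbT; apply/eqP => /esym/dot_eq0 h.
by rewrite h eqxx in nz.
Qed.

Lemma dot_mull n m (M : 'M[R]_(n, m)) u v : dot u (M *m v) = dot (M^T *m u) v.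
Proof. by rewrite /dot trmx_mul trmxK mulmxA. Qed.

End Lin.


Section R1.
Variable R : realType.
Implicit Types (n : nat).

Lemma quad_disc (a b c : R) : 0 <= c ->
  (forall t, 0 <= a + 2 * b * t + c * t ^+ 2) -> b ^+ 2 <= a * c.
Proof.
move=> c0 H; have [c_eq0|c_gt0] := eqVneq c 0.
  subst c; have [->|b0] := eqVneq b 0; first by rewrite expr0n /= mulr0.
  have := H (- (a + 1) / (2 * b)).
  have -> : a + 2 * b * (- (a + 1) / (2 * b)) + 0 * (- (a + 1) / (2 * b)) ^+ 2 = -1.
    by field.
    idtac.
  by move=> h; lra.
have cp : 0 < c by rewrite lt_neqAle eq_sym c_gt0.
have := H (- b / c).
have -> : a + 2 * b * (- b / c) + c * (- b / c) ^+ 2 = (a * c - b ^+ 2) / c.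
  by field.
by rewrite pmulr_lge0 ?invr_gt0 // subr_ge0.
Qed.


Definition qf n (M : 'M[R]_n) v := dot v (M *m v).

Lemma qf_expand n (M : 'M[R]_n) w v t : M^T = M ->
  qf M (w + t *: v) = qf M w + 2 * dot w (M *m v) * t + qf M v * t ^+ 2.
Proof.
move=> sM; rewrite /qf mulmxDr -scalemxAr !(dotDl, dotDr, dotZl, dotZr).
have -> : dot v (M *m w) = dot w (M *m v) by rewrite dot_mull sM dotC.
ring.
Qed.

Lemma cs_psd n (M : 'M[R]_n) w v : M^T = M -> (forall u, 0 <= qf M u) ->
  dot w (M *m v) ^+ 2 <= qf M w * qf M v.
Proof.
move=> sM pM; apply: quad_disc => // t.
by rewrite -qf_expand.
Qed.

Lemma cs_dot n (w v : 'cV[R]_n) : dot w v ^+ 2 <= dot w w * dot v v.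
Proof.
have := @cs_psd n 1%:M w v (trmx1 _ _).
rewrite /qf !mul1mx; apply => u; rewrite mul1mx; exact: dot_ge0.
Qed.

Lemma bound_mx m n (M : 'M[R]_(m, n)) :
  exists L, 0 <= L /\ forall u, dot (M *m u) (M *m u) <= L * dot u u.
Proof.
exists (\sum_i dot (row i M)^T (row i M)^T); split.
  by apply: sumr_ge0 => i _; exact: dot_ge0.
move=> u; rewrite mulr_suml dotE; apply: ler_sum => i _.
have -> : (M *m u) i 0 = dot (row i M)^T u.
  by rewrite /dot trmxK -row_mul [in RHS]mxE.
rewrite -expr2; exact: cs_dot.
Qed.

Lemma qf_bound n (M : 'M[R]_n) :
  exists L, 0 < L /\ forall w, `|qf M w| <= L * dot w w.
Proof.
have [L [L0 HL]] := bound_mx M.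
exists (L + 1); split; first by lra.
move=> w; have h1 := cs_dot w (M *m w).
have h2 := HL w; have h3 := dot_ge0 w.
have hq : qf M w ^+ 2 <= ((L + 1) * dot w w) ^+ 2.
  rewrite /qf; apply: (le_trans h1).
  have h4 := dot_ge0 (M *m w).
  rewrite exprMn; nra.
have hy : 0 <= (L + 1) * dot w w by rewrite mulr_ge0 //; lra.
rewrite ler_norml; apply/andP; split; nra.
Qed.


Lemma qf0 n (M : 'M[R]_n) : qf M 0 = 0.
Proof. by rewrite /qf mulmx0 dot0r. Qed.

Lemma qfB n (M : 'M[R]_n) mu v : qf (M - mu%:M) v = qf M v - mu * dot v v.
Proof. by rewrite /qf mulmxBl mul_scalar_mx dotBr dotZr. Qed.

Lemma rayleigh_min n (M : 'M[R]_n) l : M^T = M -> is_min_eig M l ->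
  forall v, l * dot v v <= qf M v.
Proof.
move=> sM [eigl minl].
have [L [L0 HL]] := qf_bound M.
pose S := [set x | exists v : 'cV[R]_n, v != 0 /\ x = qf M v / dot v v].
have lbS : lbound S (- L).
  move=> x [v [vnz ->]]; have dp := dot_gt0 vnz.
  rewrite ler_pdivlMr // mulNr; have := HL v; rewrite ler_norml => /andP[] //.
have neS : S !=set0.
  move/eigenvalueP: eigl => [v0 _ v0nz]; exists (qf M v0^T / dot v0^T v0^T).
  by exists v0^T; split => //; rewrite trmx_eq0.
have hiS : has_inf S by split => //; exists (- L).
pose mu := inf S.
have mu_lb : forall v, v != 0 -> mu * dot v v <= qf M v.
  move=> v vnz; have dp := dot_gt0 vnz.
  rewrite -ler_pdivlMr //; apply: ge_inf; first by exists (- L).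
  by exists v.
have eig : eigenvalue M mu.
  apply/eigenvalueP.
  suff /det0P [v vnz hv] : \det (mu%:M - M) == 0.
    by exists v => //; move: hv; rewrite mulmxBr mul_mx_scalar => /eqP; rewrite subr_eq0 => /eqP <-.
  case: (boolP ((mu%:M - M) \in unitmx)); last by rewrite unitmxE unitfE negbK.
  move=> U; exfalso.
  pose N := M - mu%:M.
  have sN : N^T = N by rewrite /N linearB /= sM tr_scalar_mx.
  have pN : forall v, 0 <= qf N v.
    move=> v; rewrite qfB; have [->|vnz] := eqVneq v 0; first by rewrite qf0 dot0r mulr0 subrr.
    by rewrite subr_ge0 mu_lb.
  have [K [K0 HK]] := bound_mx (invmx (mu%:M - M)).
  have [L2 [L20 HL2]] := qf_bound N.
  have h1 : forall v, dot v v <= K * dot (N *m v) (N *m v).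
    move=> v; have := HK ((mu%:M - M) *m v); rewrite mulKmx //.
    have -> : (mu%:M - M) *m v = - (N *m v) by rewrite /N -mulNmx opprB.
    by rewrite dotNl dotNr opprK.
  have h2 : forall v, dot (N *m v) (N *m v) <= L2 * qf N v.
    move=> v; have := cs_psd (N *m v) v sN pN.
    have := HL2 (N *m v); rewrite ler_norml => /andP[_ h3].
    have := pN v; have := dot_ge0 (N *m v).
    move: (dot (N *m v) (N *m v)) (qf N (N *m v)) (qf N v) h3 => d q2 q h3 d0 q0 hc.
    have h4 := ler_wpM2r q0 h3.
    have h5 : d * d <= d * (L2 * q) by rewrite -expr2; apply: (le_trans hc); apply: (le_trans h4); rewrite mulrA [d * L2]mulrC.
    have [d00|dp] := eqVneq d 0; first by rewrite d00 mulr_ge0 // ltW.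
    have dpp : 0 < d by rewrite lt_neqAle eq_sym dp.
    by rewrite -(ler_pM2l dpp).
  pose eps := 1 / (K * L2 + 1).
  have KL0 : 0 <= K * L2 by rewrite mulr_ge0 // ltW.
  have KL1 : 0 < K * L2 + 1 by clear -KL0; lra.
  have e0 : 0 < eps by rewrite /eps divr_gt0.
  have e1 : eps * (K * L2 + 1) = 1 by rewrite /eps mul1r mulVf // gt_eqF.
  have [x [v [vnz ->]] hx] := @inf_adherent _ S eps e0 hiS.
  have dp := dot_gt0 vnz.
  have hx2 : qf N v < eps * dot v v.
    rewrite qfB; move: hx; rewrite ltr_pdivrMr // => hx; rewrite -/mu; nra.
  have := h1 v; have := h2 v; have := pN v; nra.
move=> v; have [->|vnz] := eqVneq v 0; first by rewrite qf0 dot0r mulr0.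
have := minl _ eig; have := dot_ge0 v; have := mu_lb v vnz; nra.
Qed.


Lemma eigenvalueN n (M : 'M[R]_n) a : eigenvalue (- M) a = eigenvalue M (- a).
Proof.
apply/eigenvalueP/eigenvalueP => [] [v hv vnz]; exists v => //.
  by rewrite scaleNr -hv mulmxN opprK.
by rewrite mulmxN hv scaleNr opprK.
Qed.

Lemma rayleigh_max n (M : 'M[R]_n) l : M^T = M -> is_max_eig M l ->
  forall v, qf M v <= l * dot v v.
Proof.
move=> sM [eigl maxl] v.
have h : is_min_eig (- M) (- l).
  split; first by rewrite eigenvalueN opprK.
  by move=> a; rewrite eigenvalueN => /maxl; rewrite lerNl.
have := rayleigh_min (M := - M) (l := - l) _ h v.
rewrite /qf mulNmx dotNr mulNr lerN2; apply.
by rewrite linearN /= sM.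
Qed.

Lemma qfE n (M : 'M[R]_n) v : (v^T *m M *m v) 0 0 = qf M v.
Proof. by rewrite /qf /dot mulmxA. Qed.

Lemma min_eig_pos n (M : 'M[R]_n) l : sym_posdef M -> is_min_eig M l -> 0 < l.
Proof.
move=> [sM pM] [eigl _]; move/eigenvalueP: eigl => [v hv vnz].
have vTnz : v^T != 0 by rewrite trmx_eq0.
have := pM _ vTnz; rewrite trmxK hv -scalemxAl mxE.
have := dot_gt0 vTnz; rewrite /dot trmxK => h1 h2.
by rewrite -(pmulr_lgt0 _ h1).
Qed.

End R1.


Section D.
Variable R : realType.

Lemma hd_mul m k l (f : R -> 'M[R]_(m, k)) (g : R -> 'M[R]_(k, l)) t df dg :
  has_deriv f t df -> has_deriv g t dg ->
  has_deriv (fun s => f s *m g s) t (df *m g t + f t *m dg).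
Proof.
move=> hf hg i j; rewrite !mxE -big_split /=.
have -> : (fun s => (f s *m g s) i j) = \sum_(k0 < k) (fun s => f s i k0 * g s k0 j).
  by apply/funext => s; rewrite mxE fct_sumE.
apply: is_derive_sum => k0.
have := @is_deriveM R R (fun s => f s i k0) (fun s => g s k0 j) t 1 _ _ (hf i k0) (hg k0 j).
have -> : (fun s => f s i k0 * g s k0 j) = (fun s => f s i k0) * (fun s => g s k0 j) by [].
move=> h.
suff -> : df i k0 * g t k0 j + f t i k0 * dg k0 j = f t i k0 *: dg k0 j + g t k0 j *: df i k0 by [].
by rewrite addrC; congr (_ + _); exact: mulrC.
Qed.


Lemma isd_ext (f g : R -> R) (t d : R) : (forall s, f s = g s) -> is_derive t 1 f d -> is_derive t 1 g d.
Proof. by move=> e; have -> : g = f by apply/funext => s; rewrite e. Qed.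

Lemma isd_add (f g : R -> R) (t df dg : R) : is_derive t 1 f df -> is_derive t 1 g dg ->
  is_derive t 1 (fun s => f s + g s) (df + dg).
Proof. move=> hf hg; have := is_deriveD hf hg; exact. Qed.

Lemma isd_sub (f g : R -> R) (t df dg : R) : is_derive t 1 f df -> is_derive t 1 g dg ->
  is_derive t 1 (fun s => f s - g s) (df - dg).
Proof. move=> hf hg; have := is_deriveB hf hg; exact. Qed.

Lemma isd_mul (f g : R -> R) (t df dg : R) : is_derive t 1 f df -> is_derive t 1 g dg ->
  is_derive t 1 (fun s => f s * g s) (df * g t + f t * dg).
Proof.
move=> hf hg; have := is_deriveM hf hg.
have -> : (fun s => f s * g s) = f * g by [].
move=> h; suff -> : df * g t + f t * dg = f t *: dg + g t *: df by [].
by rewrite addrC; congr (_ + _); exact: mulrC.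
Qed.

Lemma isd_cst (c t : R) : is_derive t 1 (fun _ : R => c) 0.
Proof. exact: is_derive_cst. Qed.

Lemma isd_scale (a : R) (f : R -> R) (t df : R) : is_derive t 1 f df ->
  is_derive t 1 (fun s => a * f s) (a * df).
Proof.
move=> hf; have := isd_mul (isd_cst a t) hf; rewrite mul0r add0r; exact.
Qed.

Lemma hd_entry m k (f : R -> 'M[R]_(m, k)) t df i j : has_deriv f t df ->
  is_derive t 1 (fun s => f s i j) (df i j).
Proof. by apply. Qed.

Lemma hd_ext m k (f g : R -> 'M[R]_(m, k)) t d : (forall s, f s = g s) ->
  has_deriv f t d -> has_deriv g t d.
Proof. by move=> e; have -> : g = f by apply/funext => s; rewrite e. Qed.

Lemma hd_add m k (f g : R -> 'M[R]_(m, k)) t df dg : has_deriv f t df -> has_deriv g t dg ->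
  has_deriv (fun s => f s + g s) t (df + dg).
Proof.
move=> hf hg i j; rewrite mxE; apply: (isd_ext _ (isd_add (hf i j) (hg i j))).
by move=> s; rewrite mxE.
Qed.

Lemma hd_sub m k (f g : R -> 'M[R]_(m, k)) t df dg : has_deriv f t df -> has_deriv g t dg ->
  has_deriv (fun s => f s - g s) t (df - dg).
Proof.
move=> hf hg i j; rewrite !mxE; apply: (isd_ext _ (isd_sub (hf i j) (hg i j))).
by move=> s; rewrite !mxE.
Qed.

Lemma hd_cst m k (C : 'M[R]_(m, k)) t : has_deriv (fun _ => C) t 0.
Proof. by move=> i j; rewrite mxE; exact: isd_cst. Qed.

Lemma hd_tr m k (f : R -> 'M[R]_(m, k)) t df : has_deriv f t df ->
  has_deriv (fun s => (f s)^T) t df^T.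
Proof.
move=> hf i j; rewrite mxE; apply: (isd_ext _ (hf j i)).
by move=> s; rewrite mxE.
Qed.

Lemma hd_dot n (f g : R -> 'cV[R]_n) t df dg : has_deriv f t df -> has_deriv g t dg ->
  is_derive t 1 (fun s => dot (f s) (g s)) (dot df (g t) + dot (f t) dg).
Proof.
move=> hf hg; have := hd_mul (hd_tr hf) hg 0 0; rewrite mxE; exact.
Qed.

Lemma hd_scalar (f : R -> R) t d : has_deriv (fun s => (f s)%:M : 'M[R]_1) t (d%:M) ->
  is_derive t 1 f d.
Proof.
move=> h; have := h 0 0; rewrite mxE eqxx mulr1n; apply: isd_ext.
by move=> s; rewrite mxE eqxx mulr1n.
Qed.

Lemma pw_nonincr (f : R -> R) (D : seq R) a b : a <= b ->
  {within `[a, b], continuous f} ->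
  (forall t, a < t < b -> t \notin D -> exists2 d, is_derive t 1 f d & d <= 0) ->
  f b <= f a.
Proof.
elim: D a b => [|d D IH] a b ab cf hd.
  apply: (@ler0_derive1_le_cc R f a b) => //.
  - move=> x; rewrite in_itv /= => /hd /(_ isT) [d' hd' _]; exact: ex_derive.
  - move=> x; rewrite in_itv /= => /hd /(_ isT) [d' hd' d'0].
    by rewrite derive1E derive_val.
  - by rewrite in_itv /= lexx ab.
  - by rewrite in_itv /= lexx ab.
have [/andP[ad db]|nd] := boolP (a < d < b).
  apply: (@le_trans _ _ (f d)).
    apply: IH; first exact: ltW.
      by apply: continuous_subspaceW cf; apply: subset_itv; rewrite bnd_simp // ltW.
    move=> t /andP[dt tb] tD; apply: hd; first by rewrite (lt_trans ad dt).
    by rewrite in_cons negb_or tD andbT; apply/eqP => e; rewrite e ltxx in dt.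
  apply: IH; first exact: ltW.
    by apply: continuous_subspaceW cf; apply: subset_itv; rewrite bnd_simp // ltW.
  move=> t /andP[at1 td] tD; apply: hd; first by rewrite at1 (lt_trans td db).
  by rewrite in_cons negb_or tD andbT; apply/eqP => e; rewrite e ltxx in td.
apply: IH => // t tab tD; apply: hd => //.
rewrite in_cons negb_or tD andbT; apply/eqP => e; subst t.
by rewrite tab in nd.
Qed.

End D.


Section C.
Variable R : realType.
Variable A : set R.

Definition wc (f : R -> R) := {within A, continuous f}.
Definition co m k (f : R -> 'M[R]_(m, k)) := forall i j, wc (fun t => f t i j).

Lemma wc_ext f g : (forall s, f s = g s) -> wc f -> wc g.
Proof. by move=> e; have -> : g = f by apply/funext => s; rewrite e. Qed.

Lemma wc_add f g : wc f -> wc g -> wc (fun s => f s + g s).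
Proof. move=> hf hg x; apply: continuousD; [exact: hf|exact: hg]. Qed.

Lemma wc_mul f g : wc f -> wc g -> wc (fun s => f s * g s).
Proof. move=> hf hg x; apply: continuousM; [exact: hf|exact: hg]. Qed.

Lemma wc_cst c : wc (fun _ => c).
Proof. move=> x; exact: cst_continuous. Qed.

Lemma wc_opp f : wc f -> wc (fun s => - f s).
Proof.
move=> hf; have h := wc_mul (wc_cst (c:=-1)) hf.
apply: (wc_ext _ h) => s /=; by rewrite mulN1r.
Qed.

Lemma wc_sub f g : wc f -> wc g -> wc (fun s => f s - g s).
Proof. by move=> hf hg; apply: wc_add => //; exact: wc_opp. Qed.

Lemma wc_sum n (F : 'I_n -> R -> R) : (forall i, wc (F i)) ->
  wc (fun s => \sum_(i < n) F i s).
Proof.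
move=> hF; apply: (wc_ext (f := \sum_(i < n) F i)); first by move=> s; rewrite fct_sumE.
elim/big_ind: _ => //; first exact: wc_cst.
by move=> f g hf hg; apply: (wc_ext _ (wc_add hf hg)).
Qed.

Lemma co_mul m k l (f : R -> 'M[R]_(m, k)) (g : R -> 'M[R]_(k, l)) :
  co f -> co g -> co (fun s => f s *m g s).
Proof.
move=> hf hg i j; apply: (wc_ext (f := fun s => \sum_k0 f s i k0 * g s k0 j)).
  by move=> s; rewrite mxE.
apply: wc_sum => k0; exact: wc_mul.
Qed.

Lemma co_add m k (f g : R -> 'M[R]_(m, k)) : co f -> co g -> co (fun s => f s + g s).
Proof. move=> hf hg i j; apply: (wc_ext _ (wc_add (hf i j) (hg i j))) => s; by rewrite mxE. Qed.

Lemma co_sub m k (f g : R -> 'M[R]_(m, k)) : co f -> co g -> co (fun s => f s - g s).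
Proof. move=> hf hg i j; apply: (wc_ext _ (wc_sub (hf i j) (hg i j))) => s; by rewrite !mxE. Qed.

Lemma co_cst m k (C : 'M[R]_(m, k)) : co (fun _ => C).
Proof. move=> i j; exact: wc_cst. Qed.

Lemma co_tr m k (f : R -> 'M[R]_(m, k)) : co f -> co (fun s => (f s)^T).
Proof. move=> hf i j; apply: (wc_ext _ (hf j i)) => s; by rewrite mxE. Qed.

Lemma co_dot n (f g : R -> 'cV[R]_n) : co f -> co g -> wc (fun s => dot (f s) (g s)).
Proof. move=> hf hg; have h := co_mul (co_tr hf) hg. have h2 := h 0 0. exact: h2. Qed.

Lemma co_scalar (f : R -> R) : co (fun s => (f s)%:M : 'M[R]_1) -> wc f.
Proof. move=> h; apply: (wc_ext _ (h 0 0)) => s; by rewrite mxE eqxx mulr1n. Qed.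

End C.


Section M.
Variable R : realType.

Lemma sum_sel N (F : 'I_N -> R) (k0 : 'I_N) m : (k0 : nat) = m ->
  \sum_k F k * ((k : nat) == m)%:R = F k0.
Proof.
move=> e; rewrite (bigD1 k0) //= e eqxx mulr1 big1 ?addr0 // => k kk0.
suff -> : ((k : nat) == m) = false by rewrite mulr0.
by apply/negbTE; apply: contra kk0 => /eqP ke; apply/eqP/val_inj; rewrite /= ke e.
Qed.

Lemma WT_selx n p (A : 'M[R]_n) (b : 'cV[R]_n) (kp : R) (th : 'cV[R]_p) : WT A b kp th *m selx R n p = A.
Proof.
apply/matrixP => i j; rewrite mxE.
rewrite (eq_bigr (fun k => WT A b kp th i k * ((k : nat) == j)%:R)); last by move=> k _; rewrite !mxE.
by rewrite (@sum_sel _ _ (lshift p (lshift 1 j))) // /WT row_mxEl row_mxEl.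
Qed.

Lemma WT_selc n p (A : 'M[R]_n) (b : 'cV[R]_n) (kp : R) (th : 'cV[R]_p) : WT A b kp th *m selc R n p = kp *: b.
Proof.
apply/matrixP => i j; rewrite (ord1 j) mxE.
rewrite (eq_bigr (fun k => WT A b kp th i k * ((k : nat) == n)%:R)); last by move=> k _; rewrite !mxE.
rewrite (@sum_sel _ _ (lshift p (rshift n (0 : 'I_1)))) /=; last by rewrite addn0.
by rewrite /WT row_mxEl row_mxEr.
Qed.

Lemma WT_selth n p (A : 'M[R]_n) (b : 'cV[R]_n) (kp : R) (th : 'cV[R]_p) :
  WT A b kp th *m selth R n p = kp *: (b *m th^T).
Proof.
apply/matrixP => i j; rewrite mxE.
rewrite (eq_bigr (fun k => WT A b kp th i k * ((k : nat) == (n + 1 + j)%N)%:R)); last by move=> k _; rewrite !mxE.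
by rewrite (@sum_sel _ _ (rshift (n + 1) j)) // /WT row_mxEr.
Qed.

End M.


Section V.
Variables (R : realType) (n p : nat)
  (A : 'M[R]_n) (b : 'cV[R]_n) (kp kps : R) (th : 'cV[R]_p)
  (phi : 'cV[R]_n -> 'cV[R]_p) (Ar : 'M[R]_n) (br : 'cV[R]_n) (r : R -> R)
  (P Q : 'M[R]_n) (kx : 'cV[R]_n) (kr : R) (tq : R)
  (Ym : R -> 'M[R]_(n, n + 1 + p)).
Hypotheses (hkps : kps = Num.sg kp) (hkp : kp != 0) (sP : P^T = P)
  (lyap : Ar^T *m P + P *m Ar + Q = 0) (hA : A + kp *: (b *m kx^T) = Ar)
  (hbr : (kp * kr) *: b = br) (hY : forall t, tq <= t -> Ym t = WT A b kp th).

Definition Vf (x xr kxh : R -> 'cV[R]_n) (krh : R -> R) (thh : R -> 'cV[R]_p) t :=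
  dot (x t - xr t) (P *m (x t - xr t)) + `|kp| * (dot (kxh t - kx) (kxh t - kx)
    + (krh t - kr) * (krh t - kr) + dot (thh t - th) (thh t - th)).

Lemma mul_dot m (b0 : 'cV[R]_m) k (v w : 'cV[R]_k) : b0 *m (v^T *m w) = dot v w *: b0.
Proof. by rewrite [v^T *m w]mx11_scalar mul_mx_scalar. Qed.

Lemma dotP (u v : 'cV[R]_n) : dot u (P *m v) = dot (P *m u) v.
Proof. by rewrite dot_mull sP. Qed.

Lemma qfQ (e : 'cV[R]_n) : qf Q e = - (2 * dot (P *m e) (Ar *m e)).
Proof.
have hQ : Q = - (Ar^T *m P + P *m Ar).
  by apply/eqP; rewrite -subr_eq0 opprK addrC; apply/eqP; exact: lyap.
rewrite /qf hQ mulNmx mulmxDl dotNr dotDr -!mulmxA (dot_mull Ar^T) trmxK dotC dotP.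
ring.
Qed.

Lemma F1 (e X xr0 : 'cV[R]_n) c r0 : e = X - xr0 ->
  dot (A *m X + c *: b - (Ar *m xr0 + r0 *: br)) (P *m e) +
  dot e (0 *m e + P *m (A *m X + c *: b - (Ar *m xr0 + r0 *: br))) =
  - qf Q e + 2 * dot (P *m e) b * (c - kp * dot kx X - r0 * kp * kr).
Proof.
move=> he.
have hA' : A = Ar - kp *: (b *m kx^T) by rewrite -hA addrK.
rewrite mul0mx add0r dotC qfQ -hbr hA' mulmxBl -scalemxAl -mulmxA mul_dot !dotP.
rewrite !(dotDr, dotBr, dotZr, dotNr).
have -> : dot (P *m e) (Ar *m e) = dot (P *m e) (Ar *m X) - dot (P *m e) (Ar *m xr0).
  by rewrite -dotBr -mulmxBr he.
ring.
Qed.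

Lemma dot_sym2 m (u v : 'cV[R]_m) : dot u v + dot v u = 2 * dot v u.
Proof. by rewrite dotC; ring. Qed.

Lemma E1fact (kxh0 kxt0 : 'cV[R]_n) : kxt0 = kxh0 - kx ->
  dot kxt0 ((Ar - WT A b kp th *m selx R n p - WT A b kp th *m selc R n p *m kxh0^T)^T *m b)
  = - kp * dot kxt0 kxt0 * dot b b.
Proof.
move=> hk; have hE1 : Ar - A = kp *: (b *m kx^T) by rewrite -hA addrC addKr.
rewrite dot_mull trmxK WT_selx WT_selc hE1.
rewrite mulmxBl -!scalemxAl -!mulmxA !mul_dot dotBl !dotZl.
have -> : dot kxh0 kxt0 = dot kxt0 kxt0 + dot kx kxt0 by rewrite hk dotBl; ring.
ring.
Qed.

Lemma E2fact (krh0 krt0 : R) : krt0 = krh0 - kr ->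
  ((br - krh0 *: (WT A b kp th *m selc R n p))^T *m b) 0 0 = - kp * krt0 * dot b b.
Proof.
move=> hk; rewrite -/(dot _ _) WT_selc -hbr scalerA -scalerBl dotZl hk; ring.
Qed.

Lemma E3fact (thh0 tht0 : 'cV[R]_p) : tht0 = thh0 - th ->
  dot tht0 ((WT A b kp th *m selth R n p - WT A b kp th *m selc R n p *m thh0^T)^T *m b)
  = - kp * dot tht0 tht0 * dot b b.
Proof.
move=> hk; rewrite dot_mull trmxK WT_selth WT_selc -scalemxAl -scalerBr -mulmxBr.
rewrite (_ : th^T - thh0^T = (- tht0)^T); last by rewrite hk opprB linearB.
rewrite -scalemxAl -mulmxA mul_dot dotZl dotZl dotNl; ring.
Qed.

Lemma V_deriv s x xr kxh krh thh :
  closed_loop_sol A b kp kps th phi Ar br r P Ym tq s x xr kxh krh thh ->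
  forall T, exists D : seq R, forall t, s < t -> t < T -> t \notin D ->
  is_derive t 1 (Vf x xr kxh krh thh)
   (- qf Q (x t - xr t) - Defs.eta tq t * (2 * `|kp| ^+ 2 * dot b b) *
      (dot (kxh t - kx) (kxh t - kx) + (krh t - kr) * (krh t - kr)
       + dot (thh t - th) (thh t - th))).
Proof.
move=> [_ [_ [_ [_ [_ hsol]]]]] T; have [D hD] := hsol T; exists D => t st tT tD.
have := hD t st tT tD; rewrite /=.
move=> [hx hxr hkxh hkrh hthh].
have he := hd_sub hx hxr.
have hPe := hd_mul (hd_cst P t) he.
have hkx := hd_sub hkxh (hd_cst kx t).
have hth := hd_sub hthh (hd_cst th t).
have hkr := isd_sub (hd_scalar hkrh) (isd_cst kr t).
have := isd_add (hd_dot he hPe) (isd_scale `|kp| (isd_add (isd_add (hd_dot hkx hkx) (isd_mul hkr hkr)) (hd_dot hth hth))).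
move=> hV; rewrite /Vf; apply: (is_derive_eq hV).
have hsc : ((x t - xr t)^T *m P *m b) 0 0 = dot (P *m (x t - xr t)) b by rewrite /dot trmx_mul sP.
have hk1 : ((kxh t)^T *m x t) 0 0 = dot (kxh t - kx) (x t) + dot kx (x t).
  by rewrite -/(dot _ _) dotBl; ring.
have hk3 : ((thh t)^T *m phi (x t)) 0 0 = dot (thh t - th) (phi (x t)) + dot th (phi (x t)).
  by rewrite -/(dot _ _) dotBl; ring.
rewrite F1 // hsc !subr0 hk1 hk3 -/(dot th (phi (x t))).
set e := x t - xr t; set kxt := kxh t - kx; set krt := krh t - kr.
set tht := thh t - th; set sc := dot (P *m e) b.
have hk2 : krh t = krt + kr by rewrite /krt subrK.
rewrite !dot_sym2 !(dotDr, dotZr) hk2.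
have f1 : dot kxt (kxh t) + dot kxt (- kx) = dot kxt kxt by rewrite -dotDr.
have f2 : dot tht (thh t) + dot tht (- th) = dot tht tht by rewrite -dotDr.
rewrite f1 f2.
have hsg : (kps = 1 /\ `|kp| = kp) \/ (kps = -1 /\ `|kp| = - kp).
  case: (ltgtP kp 0) => hk; last by move: hkp; rewrite hk eqxx.
    by right; rewrite hkps ltr0_sg // ltr0_norm.
  by left; rewrite hkps gtr0_sg // gtr0_norm.
case: (ltP t tq) => htq.
  rewrite /Defs.eta htq.
  by case: hsg => [[-> ->]|[-> ->]]; ring.
rewrite /Defs.eta ltNge htq /= hY //.
rewrite (E1fact (kxh0 := kxh t)) // (E2fact (krh0 := krt + kr) (krt0 := krt)); last by rewrite addrK.
rewrite (E3fact (thh0 := thh t)) //.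
by case: hsg => [[-> ->]|[-> ->]]; ring.
Qed.

Lemma V_cont s x xr kxh krh thh :
  closed_loop_sol A b kp kps th phi Ar br r P Ym tq s x xr kxh krh thh ->
  {within [set t | s <= t], continuous (Vf x xr kxh krh thh)}.
Proof.
move=> [cx [cxr [ckx [ckr [cth _]]]]].
pose S := [set t : R | s <= t].
have cx' : co S x := cx.
have cxr' : co S xr := cxr.
have ckx' : co S kxh := ckx.
have ckr' : co S (fun t => (krh t)%:M : 'M[R]_1) := ckr.
have cth' : co S thh := cth.
have ce := co_sub cx' cxr'.
have ck := co_sub ckx' (co_cst (A:=S) (C:=kx)).
have ct := co_sub cth' (co_cst (A:=S) (C:=th)).
have cr := wc_sub (co_scalar ckr') (wc_cst (A:=S) (c:=kr)).
have h := wc_add (co_dot ce (co_mul (co_cst (A:=S) (C:=P)) ce))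
   (wc_mul (wc_cst (A:=S) (c:=`|kp|)) (wc_add (wc_add (co_dot ck ck) (wc_mul cr cr)) (co_dot ct ct))).
exact h.
Qed.

End V.


Section G.
Variable R : realType.

Lemma gen_decay (V : R -> R) (D : seq R) (a b c : R) : a <= b ->
  {within `[a, b], continuous V} ->
  (forall t, a < t < b -> t \notin D -> exists2 d, is_derive t 1 V d & d <= - c * V t) ->
  V b <= expR (- c * (b - a)) * V a.
Proof.
move=> ab cV hV.
pose E := fun s : R => expR (c * s).
have dE : forall t : R, is_derive t 1 E (expR (c * t) * c).
  move=> t; have h1 := is_derive_expR (c * t).
  have h2 : is_derive t 1 (fun s : R => c * s) (c * 1).
    by apply: isd_scale; exact: is_derive_id.
  have h3 := is_derive1_comp h1 h2; rewrite mulr1 in h3; exact h3.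
have cE : continuous E.
  move=> x; apply/differentiable_continuous/derivable1_diffP.
  have := dE x; case; done.
have key : V b * E b <= V a * E a.
  apply: (pw_nonincr (f := fun s => V s * E s) (D := D) ab).
    move=> x; apply: continuousM; first exact: cV.
    exact: (continuous_subspaceT (A := `[a, b]) cE).
  move=> t tab tD; have [d hd dle] := hV t tab tD.
  exists (d * E t + V t * (expR (c * t) * c)); first exact: isd_mul.
  have Ep : 0 < E t by exact: expR_gt0.
  rewrite /E; have Ep' : 0 < expR (c * t) by exact: expR_gt0.
  nra.
have hEb : E a = expR (- c * (b - a)) * E b.
  by rewrite /E -expRD; congr expR; ring.
rewrite hEb mulrCA mulrC in key.
move: key; rewrite /E mulrA [expR (c * b) * V b]mulrC ler_pM2r //; exact: expR_gt0.
Qed.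

End G.


Section F.
Variables (R : realType) (n p : nat)
  (A : 'M[R]_n) (b : 'cV[R]_n) (kp kps : R) (th : 'cV[R]_p)
  (phi : 'cV[R]_n -> 'cV[R]_p) (Ar : 'M[R]_n) (br : 'cV[R]_n) (r : R -> R)
  (P Q : 'M[R]_n) (kx : 'cV[R]_n) (kr : R) (tq : R)
  (Ym : R -> 'M[R]_(n, n + 1 + p)) (lminP lmaxP lminQ : R).
Hypotheses (hkps : kps = Num.sg kp) (hkp : kp != 0)
  (lyap : Ar^T *m P + P *m Ar + Q = 0) (hA : A + kp *: (b *m kx^T) = Ar)
  (hbr : (kp * kr) *: b = br) (hY : forall t, tq <= t -> Ym t = WT A b kp th)
  (hb : 0 < (b^T *m b) 0 0) (pdP : sym_posdef P) (pdQ : sym_posdef Q)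
  (eP : is_min_eig P lminP) (eP2 : is_max_eig P lmaxP) (eQ : is_min_eig Q lminQ).

Let minc := Num.min lminP `|kp|.
Let maxc := Num.max lmaxP `|kp|.
Let mm := Num.min lminQ (2 * `|kp| ^+ 2 * dot b b).

Let sP : P^T = P. Proof. by case: pdP. Qed.
Let sQ : Q^T = Q. Proof. by case: pdQ. Qed.
Let lP0 : 0 < lminP. Proof. exact: min_eig_pos pdP eP. Qed.
Let lQ0 : 0 < lminQ. Proof. exact: min_eig_pos pdQ eQ. Qed.
Let kp0 : 0 < `|kp|. Proof. by rewrite normr_gt0. Qed.
Let minc0 : 0 < minc. Proof. by rewrite /minc lt_min lP0 kp0. Qed.
Let maxc0 : 0 < maxc. Proof. by rewrite /maxc lt_max kp0 orbT. Qed.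
Let bb0 : 0 < dot b b. Proof. exact: hb. Qed.
Let mm0 : 0 < mm.
Proof. by rewrite /mm lt_min lQ0 /= !mulr_gt0 // exprn_gt0. Qed.

Definition S3 (kxt : 'cV[R]_n) (krt : R) (tht : 'cV[R]_p) :=
  dot kxt kxt + krt * krt + dot tht tht.

Lemma Vbounds (e kxt : 'cV[R]_n) krt tht :
  minc * (dot e e + dot kxt kxt + krt * krt + dot tht tht) <= qf P e + `|kp| * S3 kxt krt tht /\
  qf P e + `|kp| * S3 kxt krt tht <= maxc * (dot e e + dot kxt kxt + krt * krt + dot tht tht).
Proof.
have h1 := rayleigh_min sP eP e; have h2 := rayleigh_max sP eP2 e.
have m1 : minc <= lminP by rewrite /minc ge_min lexx.
have m2 : minc <= `|kp| by rewrite /minc ge_min lexx orbT.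
have M1 : lmaxP <= maxc by rewrite /maxc le_max lexx.
have M2 : `|kp| <= maxc by rewrite /maxc le_max lexx orbT.
have d1 := dot_ge0 e; have d2 := dot_ge0 kxt; have d3 := dot_ge0 tht.
have d4 : 0 <= krt * krt by rewrite -expr2 sqr_ge0.
rewrite /S3; split; nra.
Qed.

Lemma dbound (e kxt : 'cV[R]_n) krt tht (et : R) (c : R) :
  (0 <= et /\ c = 0) \/ (et = 1 /\ c = mm / maxc) ->
  - qf Q e - et * (2 * `|kp| ^+ 2 * dot b b) * S3 kxt krt tht <=
  - c * (qf P e + `|kp| * S3 kxt krt tht).
Proof.
have h1 := rayleigh_min sQ eQ e.
have d1 := dot_ge0 e; have d2 := dot_ge0 kxt; have d3 := dot_ge0 tht.
have d4 : 0 <= krt * krt by rewrite -expr2 sqr_ge0.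
have s30 : 0 <= S3 kxt krt tht by rewrite /S3; lra.
have k2 : 0 <= 2 * `|kp| ^+ 2 * dot b b by rewrite !mulr_ge0 // ltW.
case => [[et0 ->]|[-> ->]].
  rewrite oppr0 mul0r; have : 0 <= qf Q e by apply: le_trans h1; rewrite mulr_ge0 // ltW.
  have : 0 <= et * (2 * `|kp| ^+ 2 * dot b b) * S3 kxt krt tht by apply: mulr_ge0 => //; apply: mulr_ge0.
  move=> h h'; lra.
have [_ hV] := Vbounds e kxt krt tht.
have m1 : mm <= lminQ by rewrite /mm ge_min lexx.
have m2 : mm <= 2 * `|kp| ^+ 2 * dot b b by rewrite /mm ge_min lexx orbT.
set V := qf P e + _ in hV *.
have hV' : mm / maxc * V <= mm * (dot e e + S3 kxt krt tht).
  rewrite mulrAC ler_pdivrMr // mulrC [V * mm]mulrC -mulrA; apply: ler_wpM2l; first exact: ltW.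
  by apply: (le_trans hV); rewrite mulrC /S3 !addrA.
suff : mm * (dot e e + S3 kxt krt tht) <= qf Q e + 2 * `|kp| ^+ 2 * dot b b * S3 kxt krt tht.
  by move=> h; rewrite mul1r; lra.
nra.
Qed.

Lemma propagate s x xr kxh krh thh c t1 t2 :
  closed_loop_sol A b kp kps th phi Ar br r P Ym tq s x xr kxh krh thh ->
  s <= t1 -> t1 <= t2 -> (c = 0 \/ (c = mm / maxc /\ tq <= t1)) ->
  Vf kp th P kx kr x xr kxh krh thh t2 <=
    expR (- c * (t2 - t1)) * Vf kp th P kx kr x xr kxh krh thh t1.
Proof.
move=> sol st1 t12 hc.
have [D hD] := V_deriv hkps hkp sP lyap hA hbr hY sol (t2 + 1).
apply: (gen_decay (D := D) t12).
  apply: continuous_subspaceW (V_cont sol).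
  by move=> u /=; rewrite in_itv /= => /andP[h _]; exact: le_trans st1 h.
move=> t /andP[t1t tt2] tD; eexists.
  apply: hD => //; [exact: le_lt_trans st1 t1t | by apply: (lt_trans tt2); rewrite ltrDl ltr01].
have := @dbound (x t - xr t) (kxh t - kx) (krh t - kr) (thh t - th) (Defs.eta tq t) c.
rewrite /S3 /Vf /qf; apply.
case: hc => [->|[-> htq]].
  by left; split => //; rewrite /Defs.eta; case: ifP.
right; split => //; rewrite /Defs.eta ltNge.
by rewrite (le_trans htq (ltW t1t)).
Qed.

Lemma chiE (e kxt : 'cV[R]_n) krt (tht : 'cV[R]_p) :
  chi_norm e kxt krt tht = Num.sqrt (dot e e + dot kxt kxt + krt * krt + dot tht tht).
Proof. by rewrite /chi_norm !sq_normE expr2. Qed.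

Lemma chi_gen (e1 k1 e2 k2 : 'cV[R]_n) r1 r2 (h1 h2 : 'cV[R]_p) E : 0 <= E ->
  qf P e2 + `|kp| * S3 k2 r2 h2 <= E ^+ 2 * (qf P e1 + `|kp| * S3 k1 r1 h1) ->
  chi_norm e2 k2 r2 h2 <= Num.sqrt (maxc / minc) * E * chi_norm e1 k1 r1 h1.
Proof.
move=> E0 hV; rewrite !chiE.
have [l2 _] := Vbounds e2 k2 r2 h2.
have [_ u1] := Vbounds e1 k1 r1 h1.
set S1 := dot e1 e1 + dot k1 k1 + r1 * r1 + dot h1 h1 in u1 *.
set S2 := dot e2 e2 + dot k2 k2 + r2 * r2 + dot h2 h2 in l2 *.

have S10 : 0 <= S1.
  have := dot_ge0 e1; have := dot_ge0 k1; have := dot_ge0 h1.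
  have : 0 <= r1 * r1 by rewrite -expr2 sqr_ge0.
  rewrite /S1; lra.
have mc0 : 0 <= maxc / minc by rewrite divr_ge0 // ltW.
have E20 : 0 <= E ^+ 2 by rewrite sqr_ge0.
rewrite -[E](ger0_norm E0) -sqrtr_sqr -!sqrtrM //; last by rewrite mulr_ge0.
rewrite ler_sqrt; last by apply: mulr_ge0 => //; apply: mulr_ge0.
rewrite -(ler_pM2l minc0).
rewrite (_ : minc * (maxc / minc * E ^+ 2 * S1) = maxc * (E ^+ 2 * S1)); last first.
  by field; rewrite gt_eqF.
nra.
Qed.

Lemma expR_sq (a : R) : expR a ^+ 2 = expR (2 * a).
Proof. by rewrite expr2 -expRD; congr expR; ring. Qed.

Lemma Vchain s x xr kxh krh thh lam t1 t2 :
  closed_loop_sol A b kp kps th phi Ar br r P Ym tq s x xr kxh krh thh ->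
  s <= t1 -> t1 <= t2 -> (lam = 0 \/ (2 * lam = mm / maxc /\ tq <= t1)) ->
  Vf kp th P kx kr x xr kxh krh thh t2 <=
    expR (- lam * (t2 - t1)) ^+ 2 * Vf kp th P kx kr x xr kxh krh thh t1.
Proof.
move=> sol st1 t12 hl; rewrite expR_sq.
have -> : 2 * (- lam * (t2 - t1)) = - (2 * lam) * (t2 - t1) by ring.
apply: (propagate sol st1 t12).
case: hl => [->|[h1 h2]]; [left; ring | by right].
Qed.

Lemma Vf_eq x xr kxh krh thh t : Vf kp th P kx kr x xr kxh krh thh t =
  qf P (x t - xr t) + `|kp| * S3 (kxh t - kx) (krh t - kr) (thh t - th).
Proof. by []. Qed.

Lemma main_sec (t0 : R) : t0 < tq ->
  let chi x xr kxh krh thh t :=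
    chi_norm (x t - xr t) (kxh t - kx) (krh t - kr) (thh t - th) in
  let kappa := 2^-1 * (Num.min lminQ (2 * `|kp| ^+ 2 * (b^T *m b) 0 0)
                       / Num.max lmaxP `|kp|) in
  let alpha := Num.sqrt (Num.max lmaxP `|kp| / Num.min lminP `|kp|) in
  (forall eps : R, 0 < eps -> exists delta : R, 0 < delta /\
     forall (s : R) x xr kxh krh thh, t0 <= s ->
       closed_loop_sol A b kp kps th phi Ar br r P Ym tq s x xr kxh krh thh ->
       chi x xr kxh krh thh s < delta ->
       forall t, s <= t -> chi x xr kxh krh thh t < eps) /\
  (exists c k lam : R, [/\ 0 < c, 0 < k, 0 < lam &
     forall (s : R) x xr kxh krh thh, tq < s ->
       closed_loop_sol A b kp kps th phi Ar br r P Ym tq s x xr kxh krh thh ->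
       chi x xr kxh krh thh s < c ->
       forall t, s <= t ->
         chi x xr kxh krh thh t <= k * expR (- lam * (t - s)) * chi x xr kxh krh thh s]) /\
  (forall x xr kxh krh thh,
     closed_loop_sol A b kp kps th phi Ar br r P Ym tq t0 x xr kxh krh thh ->
     forall t, tq < t ->
       chi x xr kxh krh thh t <= alpha * expR (- kappa * (t - tq)) * chi x xr kxh krh thh t0).
Proof.
move=> t0tq chi kappa alpha.
have al0 : 0 < alpha by rewrite /alpha sqrtr_gt0 divr_gt0.
have ka : 2 * kappa = mm / maxc.
  by rewrite /kappa mulrA mulfV ?mul1r // pnatr_eq0.
have ka0 : 0 < kappa by rewrite /kappa mulr_gt0 ?invr_gt0 ?ltr0n // divr_gt0.
have key : forall s x xr kxh krh thh lam t1 t2,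
    closed_loop_sol A b kp kps th phi Ar br r P Ym tq s x xr kxh krh thh ->
    s <= t1 -> t1 <= t2 -> (lam = 0 \/ (2 * lam = mm / maxc /\ tq <= t1)) ->
    chi x xr kxh krh thh t2 <= alpha * expR (- lam * (t2 - t1)) * chi x xr kxh krh thh t1.
  move=> s x xr kxh krh thh lam t1 t2 sol st1 t12 hl.
  apply: chi_gen; first exact: expR_ge0.
  have := Vchain sol st1 t12 hl; rewrite !Vf_eq; exact.
split; [|split].
- move=> eps e0; exists (eps / alpha); split; first by rewrite divr_gt0.
  move=> s x xr kxh krh thh _ sol hd t st.
  have := key s x xr kxh krh thh 0 s t sol (lexx s) st (or_introl erefl).
  rewrite oppr0 mul0r expR0 mulr1 => h; apply: (le_lt_trans h).
  by rewrite mulrC -ltr_pdivlMr.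
- exists 1, alpha, kappa; split => //.
  move=> s x xr kxh krh thh tqs sol _ t st.
  by apply: (key s) => //; right; split => //; exact: ltW.
move=> x xr kxh krh thh sol t tqt.
have V1 := @Vchain t0 x xr kxh krh thh kappa tq t sol (ltW t0tq) (ltW tqt) (or_intror (conj ka (lexx tq))).
have V0 := @Vchain t0 x xr kxh krh thh 0 t0 tq sol (lexx t0) (ltW t0tq) (or_introl erefl).
rewrite oppr0 mul0r expR0 expr1n mul1r in V0.
apply: chi_gen; first exact: expR_ge0.
rewrite !Vf_eq in V0 V1; apply: (le_trans V1); by apply: ler_wpM2l => //; exact: sqr_ge0.
Qed.

End F.

Unset Implicit Arguments.
Set Strict Implicit.

Theorem theorem1 (R : realType) (n p : nat)
  (A : 'M[R]_n) (b : 'cV[R]_n) (kp kps : R) (th : 'cV[R]_p)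
  (phi : 'cV[R]_n -> 'cV[R]_p) (Ar : 'M[R]_n) (br : 'cV[R]_n) (r : R -> R)
  (P Q : 'M[R]_n) (kx : 'cV[R]_n) (kr : R) (t0 tq : R)
  (Ym : R -> 'M[R]_(n, n + 1 + p)) (lminP lmaxP lminQ : R) :
  0 < (b^T *m b) 0 0 ->
  kp != 0 ->
  kps = Num.sg kp ->
  loc_lipschitz phi ->
  hurwitz Ar ->
  bounded_pw_cont r ->
  sym_posdef P -> sym_posdef Q ->
  Ar^T *m P + P *m Ar + Q = 0 ->
  A + kp *: (b *m kx^T) = Ar ->
  (kp * kr) *: b = br ->
  t0 < tq ->
  (forall t, tq <= t -> Ym t = WT A b kp th) ->
  is_min_eig P lminP -> is_max_eig P lmaxP -> is_min_eig Q lminQ ->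
  let chi x xr kxh krh thh t :=
    chi_norm (x t - xr t) (kxh t - kx) (krh t - kr) (thh t - th) in
  let kappa := 2^-1 * (Num.min lminQ (2 * `|kp| ^+ 2 * (b^T *m b) 0 0)
                       / Num.max lmaxP `|kp|) in
  let alpha := Num.sqrt (Num.max lmaxP `|kp| / Num.min lminP `|kp|) in
  (* (1) uniform stability of the origin for initial times s >= t0 *)
  (forall eps : R, 0 < eps -> exists delta : R, 0 < delta /\
     forall (s : R) x xr kxh krh thh, t0 <= s ->
       closed_loop_sol A b kp kps th phi Ar br r P Ym tq s x xr kxh krh thh ->
       chi x xr kxh krh thh s < delta ->
       forall t, s <= t -> chi x xr kxh krh thh t < eps) /\
  (* (2) (uniform) exponential stability for initial times s > tq *)
  (exists c k lam : R, [/\ 0 < c, 0 < k, 0 < lam &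
     forall (s : R) x xr kxh krh thh, tq < s ->
       closed_loop_sol A b kp kps th phi Ar br r P Ym tq s x xr kxh krh thh ->
       chi x xr kxh krh thh s < c ->
       forall t, s <= t ->
         chi x xr kxh krh thh t <= k * expR (- lam * (t - s)) * chi x xr kxh krh thh s]) /\
  (* (3) explicit exponential bound from t0 *)
  (forall x xr kxh krh thh,
     closed_loop_sol A b kp kps th phi Ar br r P Ym tq t0 x xr kxh krh thh ->
     forall t, tq < t ->
       chi x xr kxh krh thh t <= alpha * expR (- kappa * (t - tq)) * chi x xr kxh krh thh t0).
Proof.
move=> hb hkp hkps _ _ _ pdP pdQ lyap hA hbr t0tq hY eP eP2 eQ.
exact: (main_sec phi r hkps hkp lyap hA hbr hY hb pdP pdQ eP eP2 eQ t0tq).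
Qed.
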